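(* Let $N\ge3$, let $A=(\mathbb{Z}/N\mathbb{Z})^2$ and let $I=\mathbb{Q}[A]^0$ be the augmentation ideal (degree-$0$ elements) of the group algebra $\mathbb{Q}[A]$. Let $H=A\rtimes\{\pm1\}$ act on $I\otimes I$ by $a\cdot(d_0\otimes d_1)=([a]d_0)\otimes([-a]d_1)$ for $a\in A$ and $(-1)\cdot(d_0\otimes d_1)=-(d_1\otimes d_0)$, and let $\varepsilon:H\to\{\pm1\}$ be the canonical projection. Then the multiplication map $\mu:I\otimes I\to I$, $d_0\otimes d_1\mapsto d_0d_1$, induces an isomorphism $(I\otimes I)^\varepsilon\xrightarrow{\cong}I$, where $(I\otimes I)^\varepsilon=\{x : h\cdot x=\varepsilon(h)x\ \forall h\in H\}$.
   Context: For $a\in A$, $[a]$ denotes the corresponding basis element of $\mathbb{Q}[A]$, and products are taken in the group algebra. *)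

(* Defs.v *)
From HB Require Import structures.
From mathcomp Require Import all_boot all_order all_algebra.
Set Implicit Arguments. Unset Strict Implicit. Unset Printing Implicit Defensive.
Import Order.TTheory GRing.Theory Num.Theory.
Local Open Scope ring_scope.

(* Group algebra Q[A] of a finite abelian group A, realized as functions A -> rat. *)
Notation QA A := {ffun A -> rat}.
Notation QAA A := {ffun (A * A)%type -> rat}.

Section GroupAlgebra.
Variable A : finZmodType.
Local Notation QA := (QA A).
Local Notation QAA := (QAA A).


Definition gbasis (a : A) : QA := [ffun x => (x == a)%:R].

Definition gmul (d0 d1 : QA) : QA :=
  [ffun c => \sum_(p : A * A | p.1 + p.2 == c) d0 p.1 * d1 p.2].

Definition augI (d : QA) : Prop := \sum_(x : A) d x = 0.

(* Q[A] (x) Q[A] realized as Q[A x A]; pure tensor d0 (x) d1 *)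
Definition tens (d0 d1 : QA) : QAA := [ffun p => d0 p.1 * d1 p.2].

Definition inII (f : QAA) : Prop :=
  exists s : seq (QA * QA),
    (forall p, p \in s -> augI p.1 /\ augI p.2) /\
    f = \sum_(p <- s) tens p.1 p.2.

(* multiplication map mu : the linear extension of d0 (x) d1 |-> d0 d1,
   written on the basis [a] (x) [b] of Q[A] (x) Q[A] *)
Definition mu (f : QAA) : QA :=
  [ffun c => \sum_(p : A * A) f p * gmul (gbasis p.1) (gbasis p.2) c].

(* H = A x| {+-1}; an element (a, s) with s = true meaning -1, acting as a o s.
   a . (d0 (x) d1) = ([a] d0) (x) ([-a] d1) ; (-1) . (d0 (x) d1) = -(d1 (x) d0) *)
Definition Hact (h : A * bool) (f : QAA) : QAA :=
  let g : QAA := if h.2 then [ffun p => - f (p.2, p.1)] else f in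
  [ffun p => g (p.1 - h.1, p.2 + h.1)].

Definition eps (h : A * bool) : rat := if h.2 then -1 else 1.

Definition inIIeps (f : QAA) : Prop :=
  inII f /\ forall h : A * bool, Hact h f = [ffun p => eps h * f p].

End GroupAlgebra.

(* A = (Z/NZ)^2 as a finite abelian group ('Z_N is Z/NZ for N >= 2) *)
Definition ZN2 (N : nat) := ('Z_N * 'Z_N)%type.
HB.instance Definition _ N := GRing.Zmodule.on (ZN2 N).
HB.instance Definition _ N := Finite.on (ZN2 N).

(* Main.v *)
Require Import Defs.
From HB Require Import structures.
From mathcomp Require Import all_boot all_order all_algebra.
Set Implicit Arguments. Unset Strict Implicit. Unset Printing Implicit Defensive.
Import Order.TTheory GRing.Theory Num.Theory.
Local Open Scope ring_scope.

Section S.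
Variable A : finZmodType.

Lemma gbasisE (a x : A) : gbasis a x = (x == a)%:R.
Proof. by rewrite ffunE. Qed.

Lemma gmul_basis (a b c : A) : gmul (gbasis a) (gbasis b) c = (a + b == c)%:R.
Proof.
rewrite ffunE big_mkcond (bigD1 (a, b)) //= !gbasisE !eqxx mulr1 big1 ?addr0.
  by case: (a + b == c).
move=> [x y] /=; rewrite xpair_eqE negb_and !gbasisE.
by case/orP=> /negbTE ->; rewrite ?mul0r ?mulr0; case: ifP.
Qed.

Lemma muE (f : QAA A) c : mu f c = \sum_(p : A * A | p.1 + p.2 == c) f p.
Proof.
rewrite ffunE [RHS]big_mkcond; apply: eq_bigr => p _.
by rewrite gmul_basis; case: ifP; rewrite ?mulr1 ?mulr0.
Qed.

Lemma sum_pairc (F : A -> rat) c : \sum_(p : A * A | p.1 + p.2 == c) F (p.1 + p.2) = F c *+ #|A|.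
Proof.
rewrite (eq_bigr (fun _ => F c)); last by move=> p /eqP ->.
rewrite -(pair_big_dep xpredT (fun x y => x + y == c) (fun _ _ => F c)) /=.
rewrite -sumr_const; apply: eq_bigr => x _.
rewrite (big_pred1 (c - x)) // => y /=.
by rewrite -(inj_eq (addrI (- x))) addKr addrC.
Qed.

Lemma form (f : QAA A) : inIIeps f ->
  (forall p, f p = f (p.1 + p.2, 0)) /\ \sum_x f (x, 0) = 0.
Proof.
case=> [[s [Hs Hf]] Hinv]; split.
  move=> [x y] /=.
  have := congr1 (fun g : QAA A => g (x + y, 0)) (Hinv (y, false)).
  by rewrite /Hact /eps /= !ffunE /= mul1r addrK add0r.
rewrite Hf.
under eq_bigr do rewrite sum_ffunE.
rewrite exchange_big /= big_seq; apply: big1 => p Hp.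
under eq_bigr do rewrite ffunE /=.
by rewrite -mulr_suml (Hs p Hp).1 mul0r.
Qed.

Lemma mu_form (f : QAA A) : inIIeps f -> forall c, mu f c = f (c, 0) *+ #|A|.
Proof.
move=> /form [H1 _] c; rewrite muE -(sum_pairc (fun c => f (c, 0))).
by apply: eq_bigr => p _; rewrite H1.
Qed.

Lemma sum_gbasis (a : A) : \sum_x gbasis a x = 1.
Proof.
rewrite (bigD1 a) //= gbasisE eqxx big1 ?addr0 // => x /negbTE.
by rewrite gbasisE => ->.
Qed.

Lemma sum_gbasisL (x : A) (G : A -> rat) : \sum_a gbasis a x * G a = G x.
Proof.
rewrite (bigD1 x) //= gbasisE eqxx mul1r big1 ?addr0 // => a.
by rewrite gbasisE eq_sym => /negbTE ->; rewrite mul0r.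
Qed.

Lemma eq_sub (y c a : A) : (y == c - a) = (a == c - y).
Proof. by rewrite eq_sym subr_eq [a == _]eq_sym subr_eq addrC. Qed.

Lemma sum_gbasis_sub (c y : A) : \sum_a gbasis (c - a) y = 1.
Proof.
rewrite -(sum_gbasis (c - y)); apply: eq_bigr => a _.
by rewrite !gbasisE eq_sub.
Qed.

Lemma inner (c x y : A) :
  \sum_a (gbasis a x - gbasis 0 x) * (gbasis (c - a) y - gbasis (- a) y)
  = (x + y == c)%:R - (x + y == 0)%:R.
Proof.
under eq_bigr do rewrite mulrBl.
rewrite sumrB sum_gbasisL -mulr_sumr sumrB sum_gbasis_sub.
have -> : \sum_a gbasis (- a) y = 1.
  by rewrite -(sum_gbasis_sub 0 y); apply: eq_bigr => a _; rewrite sub0r.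
rewrite subrr mulr0 subr0 !gbasisE.
have E c' : (y == c' - x) = (x + y == c') by rewrite eq_sym subr_eq addrC eq_sym.
by rewrite E -[- x]sub0r E.
Qed.

Lemma sum_gbasis' (a : A) : \sum_i (i == a)%:R = 1 :> rat.
Proof. by rewrite -[RHS](sum_gbasis a); apply: eq_bigr => i _; rewrite gbasisE. Qed.

Lemma inner2 (c x y : A) :
  \sum_a ((x == a)%:R - (x == 0)%:R) * ((y == c - a)%:R - (y == - a)%:R)
  = (x + y == c)%:R - (x + y == 0)%:R :> rat.
Proof. by rewrite -(inner c x y); apply: eq_bigr => a _; rewrite !gbasisE. Qed.

Lemma sum_psi (psi : A -> rat) z : \sum_c psi c * (z == c)%:R = psi z.
Proof.
rewrite (bigD1 z) //= eqxx mulr1 big1 ?addr0 // => c.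
by rewrite eq_sym => /negbTE ->; rewrite mulr0.
Qed.

Lemma constr (psi : A -> rat) : \sum_x psi x = 0 ->
  inIIeps [ffun p : A * A => psi (p.1 + p.2)].
Proof.
move=> Hpsi; split.
  exists (map (fun q : A * A => ([ffun x => psi q.1 * (gbasis q.2 x - gbasis 0 x)] : QA A,
                               gbasis (q.1 - q.2) - gbasis (- q.2)))
              (index_enum (A * A)%type)).
  split.
    move=> p /mapP [q _ ->] /=; split; rewrite /augI.
      under eq_bigr do rewrite !ffunE.
      by rewrite -mulr_sumr sumrB !sum_gbasis' subrr mulr0.
    under eq_bigr do rewrite !ffunE.
    by rewrite sumrB !sum_gbasis' subrr.
  apply/ffunP => -[x y]; rewrite big_map sum_ffunE ffunE /=.
  under eq_bigr do rewrite !ffunE /=.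
  rewrite -(pair_big xpredT xpredT (fun c a =>
     psi c * ((x == a)%:R - (x == 0)%:R) * ((y == c - a)%:R - (y == - a)%:R))) /=.
  under eq_bigr => c _.
    under eq_bigr do rewrite -mulrA.
    rewrite -mulr_sumr inner2.
  over.
  under eq_bigr do rewrite mulrBr.
  by rewrite sumrB sum_psi -mulr_suml Hpsi mul0r subr0.
move=> [a []]; apply/ffunP=> p; rewrite !ffunE /eps /=.
  by rewrite mulN1r addrC [p.2 + a]addrC addrA subrK.
by rewrite mul1r [p.2 + a]addrC addrA subrK.
Qed.

Lemma cardA_neq0 : (#|A| != 0)%N.
Proof. by rewrite -lt0n; apply/card_gt0P; exists 0. Qed.

Theorem gen :
    (forall f : QAA A, inIIeps f -> augI (mu f)) /\
  (forall f g : QAA A, inIIeps f -> inIIeps g -> mu f = mu g -> f = g) /\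
  (forall d : QA A, augI d -> exists f : QAA A, inIIeps f /\ mu f = d).
Proof.
split; [|split].
- move=> f Hf; rewrite /augI.
  under eq_bigr do rewrite mu_form //.
  by rewrite sumrMnl (form Hf).2 mul0rn.
- move=> f g Hf Hg Heq; apply/ffunP => p.
  rewrite (form Hf).1 (form Hg).1.
  have := congr1 (fun h : QA A => h (p.1 + p.2)) Heq; rewrite /= !mu_form //.
  have nz : (#|A|%:R : rat) != 0 by rewrite pnatr_eq0 cardA_neq0.
  by move=> E; apply: (mulIf nz); rewrite !mulr_natr; exact: E.
- move=> d Hd.
  pose psi := fun c => d c / #|A|%:R.
  have Hs : \sum_x psi x = 0 by rewrite /psi -mulr_suml Hd mul0r.
  have Hf := constr Hs.
  exists [ffun p : A * A => psi (p.1 + p.2)]; split; first exact: Hf.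
  apply/ffunP => c; rewrite (mu_form Hf) ffunE /= addr0 -mulr_natr /psi divfK //.
  by rewrite pnatr_eq0 cardA_neq0.
Qed.
End S.

Theorem lemma5p10 (N : nat) (hN : (3 <= N)%N) :
    (forall f : QAA (ZN2 N), inIIeps f -> augI (mu f)) /\
  (forall f g : QAA (ZN2 N), inIIeps f -> inIIeps g -> mu f = mu g -> f = g) /\
  (forall d : QA (ZN2 N), augI d -> exists f : QAA (ZN2 N), inIIeps f /\ mu f = d).
Proof. exact: (@gen (ZN2 N)). Qed.
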